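(* Let $\mathcal{H}_{DFdB}$ be the Dynkin–Faà di Bruno Hopf algebra with antipode $S$. For $n\ge1$ let $A_n$ be the $n\times n$ matrix with entries $(A_n)_{ij}=B_{n-i+2,\,n-j+1}(X_0,X_1,X_2,\dots)$, $1\le i,j\le n$ (so subdiagonal entries equal $1$ and entries below the subdiagonal equal $0$). Then $$S(X_n)=-\,\big|A_n\big|_{1n},$$ the negative of the quasideterminant of $A_n$ computed at the top right entry.
   Context: Noncommutative Bell polynomials: in the free associative algebra on letters $d_1,d_2,\dots$ with the derivation $\partial$ determined by $\partial(d_i)=d_{i+1}$ and the Leibniz rule, set $B_0=1$ and $B_n=d_1B_{n-1}+\partial(B_{n-1})$. Grading words by $|d_{j_1}\cdots d_{j_k}|=j_1+\dots+j_k$, $B_n$ is homogeneous of degree $n$; the partial Bell polynomial $B_{n,k}$ is the sum of the terms of $B_n$ consisting of words with exactly $k$ letters ($B_{n,k}=0$ if $k>n$, $B_{n,n}=d_1^n$). $B_{n,k}(X_0,X_1,X_2,\dots)$ denotes the result of substituting $d_i\mapsto X_{i-1}$. The Dynkin–Faà di Bruno Hopf algebra is the free associative algebra $\mathbb{K}\langle X_1,X_2,\dots\rangle$ with unit $X_0=1$, graded by $|X_n|=n$, with algebra-morphism coproduct $\Delta(X_n)=\sum_{k=0}^nB_{n+1,k+1}(X_0,X_1,\dots,X_n)\otimes X_k$ and counit $\epsilon(X_n)=\delta_{n,0}$; it is graded connected, hence has an antipode. Quasideterminant: for an $n\times n$ matrix $A=(a_{ij})$ over a noncommutative ring, with $A^{pq}$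 the matrix with row $p$ and column $q$ deleted (original indices kept), $|A|_{11}=a_{11}$ if $n=1$ and $|A|_{pq}=a_{pq}-\sum_{i\ne p,j\ne q}a_{pj}(|A^{pq}|_{ij})^{-1}a_{iq}$; for $A$ with $a_{i+1,i}=-1$, $a_{ij}=0$ for $i>j+1$, this equals $a_{1n}+\sum_{k\ge1}\sum_{1\le j_1<\cdots<j_k<n}a_{1j_1}a_{j_1+1,j_2}\cdots a_{j_k+1,n}$, and $|-A|_{1n}=-|A|_{1n}$. *)

(* Defs.v *)
From HB Require Import structures.
From mathcomp Require Import all_boot all_order all_algebra.
From mathcomp Require Import finmap.
From mathcomp.multinomials Require Import monalg.

Set Implicit Arguments.
Unset Strict Implicit.
Unset Printing Implicit Defensive.

Import GRing.Theory.
Local Open Scope ring_scope.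

(* Words: the free monoid on nat.  In the free algebra on d_1, d_2, ...     *)
(* the letter i stands for d_(i+1); in the free algebra on X_1, X_2, ...    *)
(* the letter i stands for X_(i+1).                                          *)
Notation word := (fmonom nat).

Notation FreeAlg K := {malg K[word]}.

Definition word2 := (word * word)%type.
HB.instance Definition _ := Choice.on word2.

Definition w2one : word2 := (mone, mone).
Definition w2mul (p q : word2) : word2 := (mmul p.1 q.1, mmul p.2 q.2).
Lemma w2mulA : associative w2mul.
Proof. by move=> [a b] [c d] [e f]; rewrite /w2mul /= !mulmA. Qed.
Lemma w2mul1m : left_id w2one w2mul.
Proof. by move=> [a b]; rewrite /w2mul /= !mul1m. Qed.
Lemma w2mulm1 : right_id w2one w2mul.
Proof. by move=> [a b]; rewrite /w2mul /= !mulm1. Qed.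
Lemma w2mul_eq1 (p q : word2) : w2mul p q = w2one -> p = w2one /\ q = w2one.
Proof.
case: p q => [a b] [c d] [] /unitm [-> ->] /unitm [-> ->]; by [].
Qed.
HB.instance Definition _ := Choice_isMonomialDef.Build word2
  w2mulA w2mul1m w2mulm1 w2mul_eq1.

(* The tensor square H (x) H, realised as the monoid algebra of pairs of    *)
(* words: K<W> (x) K<W> = K[W x W] canonically (as algebras).                *)
Notation TensorAlg K := {malg K[word2]}.

Section DFdB.
Variable K : fieldType.

Local Notation H := (FreeAlg K).
Local Notation H2 := (TensorAlg K).

Definition lext (V : lmodType K) (h : word -> V) (g : H) : V :=
  \sum_(w <- msupp g) g@_w *: h w.

Definition X (n : nat) : H := if n is m.+1 then << fmu m >> else 1.

(* letter i = d_(i+1); the derivation maps d_(i+1) to d_(i+2).        *)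
Definition dword (w : word) : H :=
  \sum_(j < size (fmonom_val w))
     << FMonom (set_nth 0%N (fmonom_val w) j (nth 0%N (fmonom_val w) j).+1) >>.
Definition deriv (g : H) : H := lext dword g.

Fixpoint bell (n : nat) : H :=
  if n is m.+1 then << fmu 0%N >> * bell m + deriv (bell m) else 1.

Definition pbell (n k : nat) : H :=
  \sum_(w <- msupp (bell n) | size (fmonom_val w) == k) << (bell n)@_w *g w >>.

(* Substitution d_i |-> X_(i-1), i.e. letter i |-> X_i (so d_1 |-> X_0 = 1). *)
Definition substX (g : H) : H :=
  lext (fun w : word => \prod_(i <- fmonom_val w) X i) g.

Definition bellX (n k : nat) : H := substX (pbell n k).

Definition tens (a b : H) : H2 :=
  \sum_(u <- msupp a) \sum_(v <- msupp b) << a@_u * b@_v *g (u, v) >>.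

Definition DeltaX (n : nat) : H2 :=
  \sum_(0 <= k < n.+1) tens (bellX n.+1 k.+1) (X k).

Definition Delta (g : H) : H2 :=
  lext (fun w : word => \prod_(i <- fmonom_val w) DeltaX i.+1) g.

(* counit: epsilon(X_n) = delta_(n,0), algebra morphism *)
Definition epsilon (g : H) : K := g@_mone.

Definition conv (f g : H -> H) (x : H) : H :=
  \sum_(p <- msupp (Delta x)) (Delta x)@_p *: (f << p.1 >> * g << p.2 >>).

Definition is_antipode (S : H -> H) : Prop :=
  (forall x : H, conv S id x = epsilon x *: 1) /\
  (forall x : H, conv id S x = epsilon x *: 1).

(* The matrix A_n, n = m+1, with (A_n)_(ij) = B_(n-i+2, n-j+1)(X), 1-based;  *)
(* with 0-based ordinals i0 = i-1, j0 = j-1 this is B_(n-i0+1, n-j0).        *)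
Definition Amat (m : nat) : 'M[H]_m.+1 :=
  \matrix_(i < m.+1, j < m.+1) bellX (m.+1 - i).+1 (m.+1 - j).

End DFdB.

Section Quasidet.
Variable R : ringType.

Fixpoint chainprod (a : nat -> nat -> R) (s : nat) (js : seq nat) (e : nat) : R :=
  if js is j :: js' then a s j * chainprod a j.+1 js' e else a s e.

(* For an (m+1)x(m+1) matrix A with a_(i+1,i) = -1 and a_(ij) = 0 for i > j+1:*)
(* |A|_(1n) = a_(1n) + sum_(k>=1) sum_(1<=j_1<...<j_k<n)                      *)
(*             a_(1 j_1) a_(j_1+1, j_2) ... a_(j_k+1, n),   n = m+1.            *)
(* The sum ranges over all subsets {j_1<...<j_k} of {1,...,n-1}.              *)
Definition qdet_hess_1n (m : nat) (A : 'M[R]_m.+1) : R :=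
  let a (i j : nat) := A (inord i.-1) (inord j.-1) in
  \sum_(J : {set 'I_m})
     chainprod a 1%N (sort leq [seq (val j).+1 | j in J]) m.+1.

(* For A with a_(i+1,i) = 1 and a_(ij) = 0 for i > j+1 (as A_n), -A is of   *)
(* the above shape and |A|_(1n) = - |-A|_(1n).                               *)
Definition qdet_1n (m : nat) (A : 'M[R]_m.+1) : R := - qdet_hess_1n (- A).

End Quasidet.

(* Main.v *)
Require Import Defs.
From HB Require Import structures.
From mathcomp Require Import all_boot all_order all_algebra.
From mathcomp Require Import finmap.
From mathcomp.multinomials Require Import monalg.
From mathcomp Require Import zify.

Set Implicit Arguments.
Unset Strict Implicit.
Unset Printing Implicit Defensive.
Import GRing.Theory.
Local Open Scope ring_scope.

Section Comb.
Variable R : ringType.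

Fixpoint Wsum (m : nat) (F : seq nat -> R) : R :=
  if m is m'.+1 then Wsum m' F + Wsum m' (fun l => F (rcons l m')) else F [::].

Lemma Wsum_ext m F G : F =1 G -> Wsum m F = Wsum m G.
Proof.
elim: m F G => [|m IH] F G FG /=; first exact: FG.
by congr (_ + _); apply: IH => // l; apply: FG.
Qed.

Lemma Wsum_mulr m F (r : R) : Wsum m (fun l => F l * r) = Wsum m F * r.
Proof.
elim: m F => [|m IH] F //=.
by rewrite mulrDl IH (IH (fun l => F (rcons l m))).
Qed.

Definition mv n (K : {set 'I_n}) : seq nat := map val (enum K).

Definition memn n (K : {set 'I_n}) (i : nat) := [exists j in K, val j == i].

Lemma mvE n (K : {set 'I_n}) : mv K = filter (memn K) (iota 0 n).
Proof.
rewrite /mv -val_enum_ord filter_map; congr map.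
rewrite {1}/enum_mem -enumT; apply: eq_filter => j /=.
apply/idP/existsP => [jK|[j' /andP[j'K /eqP/val_inj <-]]] //.
by exists j; rewrite jK eqxx.
Qed.

Definition hset m (p : {set 'I_m} * bool) : {set 'I_m.+1} :=
  (if p.2 then [set ord_max] else set0) :|: [set widen_ord (leqnSn m) i | i in p.1].
Definition hinv m (K : {set 'I_m.+1}) : {set 'I_m} * bool :=
  ([set i : 'I_m | widen_ord (leqnSn m) i \in K], ord_max \in K).

Lemma widen_inj m : injective (widen_ord (leqnSn m)).
Proof. by move=> i j /(congr1 val) /= /val_inj. Qed.

Lemma hset_widen m p (i : 'I_m) : (widen_ord (leqnSn m) i \in hset p) = (i \in p.1).
Proof.
rewrite /hset in_setU mem_imset ?orbF; last exact: widen_inj.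
case: p.2; rewrite ?in_set0 //= in_set1.
have -> : (widen_ord (leqnSn m) i == ord_max) = false.
  by apply/negbTE; apply/negP => /eqP/(congr1 val) /= H; move: (ltn_ord i); rewrite H ltnn.
done.
Qed.

Lemma hset_max m p : (ord_max \in hset (m:=m) p) = p.2.
Proof.
rewrite /hset in_setU; case: p.2; rewrite ?in_set1 ?eqxx //= in_set0 /=.
apply/negbTE/imsetP => [[i _ /(congr1 val) /= H]].
by move: (ltn_ord i); rewrite -H ltnn.
Qed.

Lemma hsetK m : cancel (@hset m) (@hinv m).
Proof.
move=> [J b]; rewrite /hinv hset_max; congr pair.
by apply/setP => i; rewrite inE hset_widen.
Qed.

Lemma hinvK m : cancel (@hinv m) (@hset m).
Proof.
move=> K; apply/setP => k; case: (unliftP ord_max k) => [j ->|->].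
  have -> : lift ord_max j = widen_ord (leqnSn m) j.
    by apply/val_inj; rewrite /= /bump leqNgt ltn_ord.
  by rewrite hset_widen /= inE.
by rewrite hset_max.
Qed.

Lemma mv_hset m p : mv (hset (m:=m) p) = if p.2 then rcons (mv p.1) m else mv p.1.
Proof.
rewrite !mvE.
have -> : iota 0 m.+1 = iota 0 m ++ [:: m] by rewrite -addn1 iotaD.
rewrite filter_cat /=.
have -> : memn (hset p) m = p.2.
  rewrite -hset_max; apply/existsP/idP => [[j /andP[jK /eqP jm]]|H].
    by have -> : ord_max = j by apply/val_inj.
  by exists ord_max; rewrite H eqxx.
have -> : [seq x <- iota 0 m | memn (hset p) x] = [seq x <- iota 0 m | memn p.1 x].
  apply: eq_in_filter => i; rewrite mem_iota add0n /= => im.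
  apply/existsP/existsP => [[j /andP[jK /eqP ji]]|[j /andP[jK /eqP ji]]].
    exists (Ordinal im); apply/andP; split => //.
    move: jK; have -> : j = widen_ord (leqnSn m) (Ordinal im) by apply/val_inj.
    by rewrite hset_widen.
  exists (widen_ord (leqnSn m) j); by rewrite hset_widen jK /= ji eqxx.
by case: p.2; rewrite ?cats1 ?cats0.
Qed.

Lemma setsum_W m (F : seq nat -> R) :
  \sum_(J : {set 'I_m}) F (mv J) = Wsum m F.
Proof.
elim: m F => [|m IH] F.
  rewrite (big_pred1 set0) => [|J]; first by rewrite /mv enum_set0.
  by rewrite /= eq_sym; apply/esym/eqP/setP => -[].
rewrite (reindex (@hset m)) /=; last first.
  by apply: onW_bij; exists (@hinv m); [exact: hsetK | exact: hinvK].
rewrite -(pair_bigA _ (fun J b => F (mv (hset (J, b))))) /=.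
rewrite -IH -(IH (fun l => F (rcons l m))) -big_split /=.
by apply: eq_bigr => J _; rewrite big_bool /= !mv_hset /= addrC.
Qed.

Lemma chain_rcons (a : nat -> nat -> R) s js j e :
  chainprod a s (rcons js j) e = chainprod a s js j * a j.+1 e.
Proof. by elim: js s => [|x js IH] s //=; rewrite IH mulrA. Qed.


Lemma invariant (m : nat) (a c : nat -> nat -> R) (T : nat -> R) :
  (forall i j, (0 < i <= m.+1)%N -> (0 < j <= m.+1)%N -> a i j = c (m.+2 - i)%N (m.+1 - j)%N) ->
  T 0%N = 1 ->
  (forall k, (0 < k <= m.+1)%N -> T k = \sum_(q < k) c k q * T q) ->
  Wsum m (fun l => chainprod a 1 (map succn l) m.+1) = T m.+1.
Proof.
move=> Ha T0 Trec.
pose V m' e := Wsum m' (fun l => chainprod a 1 (map succn l) e).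
have VS m' e : V m'.+1 e = V m' e + V m' m'.+1 * a m'.+2 e.
  rewrite /V /= -Wsum_mulr; congr (_ + _); apply: Wsum_ext => l.
  by rewrite map_rcons chain_rcons.
have inv : forall m', (m' <= m)%N ->
    \sum_(q < m.+1 - m') V m' (m.+1 - q)%N * T q = T m.+1.
  elim => [_|m' IH lt].
    rewrite subn0 [RHS]Trec; last by lia.
    apply: eq_bigr => q _.
    rewrite /V /= Ha; last 2 first.
    - by [].
    - by move: (ltn_ord q); lia.
    by congr (c _ _ * _); move: (ltn_ord q); lia.
  have lem : (m' <= m)%N by lia.
  move: (IH lem); set r := (m - m')%N.
  have -> : (m.+1 - m' = r.+1)%N by rewrite /r; lia.
  have -> : (m.+1 - m'.+1 = r)%N by rewrite /r; lia.
  rewrite big_ord_recr /= => <-.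
  under eq_bigr => q _ do rewrite VS mulrDl -mulrA.
  rewrite big_split /= -mulr_sumr; congr (_ + _).
  have -> : (m.+1 - r = m'.+1)%N by rewrite /r; lia.
  congr (_ * _); rewrite [RHS]Trec; last by rewrite /r; lia.
  apply: eq_bigr => q _; rewrite Ha; last 2 first.
  - by lia.
  - by move: (ltn_ord q); rewrite /r; lia.
  by congr (c _ _ * _); move: (ltn_ord q); rewrite /r; lia.
have := inv m (leqnn m); rewrite subSnn big_ord1 /= subn0 T0 mulr1.
by [].
Qed.

End Comb.
Section Alg.
Variable K : fieldType.
Local Notation H := (FreeAlg K).
Local Notation H2 := (TensorAlg K).

Definition glext (T : choiceType) (V : lmodType K) (h : T -> V) (g : {malg K[T]}) : V :=
  \sum_(w <- msupp g) g@_w *: h w.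

Section GL.
Variables (T : choiceType) (V : lmodType K) (h : T -> V).

Lemma glextEw (g : {malg K[T]}) (d : {fset T}) : (msupp g `<=` d)%fset ->
  glext h g = \sum_(w <- d) g@_w *: h w.
Proof.
move=> le; rewrite /glext (big_fset_incl _ le) // => x _ /mcoeff_outdom ->.
by rewrite scale0r.
Qed.

Lemma glextD g1 g2 : glext h (g1 + g2) = glext h g1 + glext h g2.
Proof.
rewrite (@glextEw _ (msupp g1 `|` msupp g2)%fset) ?msuppD_le //.
rewrite (@glextEw g1 (msupp g1 `|` msupp g2)%fset) ?fsubsetUl //.
rewrite (@glextEw g2 (msupp g1 `|` msupp g2)%fset) ?fsubsetUr // -big_split /=.
by apply: eq_bigr => w _; rewrite mcoeffD scalerDl.
Qed.

Lemma glext0 : glext h 0 = 0.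
Proof. by rewrite /glext msupp0 big_nil. Qed.

Lemma glext_sum I r (P : pred I) (F : I -> {malg K[T]}) :
  glext h (\sum_(i <- r | P i) F i) = \sum_(i <- r | P i) glext h (F i).
Proof. exact: (big_morph _ glextD glext0). Qed.

Lemma glextU c k : glext h << c *g k >> = c *: h k.
Proof. by rewrite (glextEw msuppU_le) big_seq_fset1 mcoeffUU. Qed.
End GL.

Lemma monalgUZ (M : monomType) c (k : M) : << c *g k >> = c *: (<< k >> : {malg K[M]}).
Proof.
apply/malgP => k'; rewrite mcoeffZ mcoeffU mcoeffU1.
by case: eqP; rewrite ?mulr1 ?mulr0.
Qed.

Lemma malgC_comm (M : monomType) (x : {malg K[M]}) c : x * c%:MP = c%:MP * x.
Proof.
rewrite (monalgE x) mulr_suml mulr_sumr; apply: eq_bigr => u _.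
by rewrite !malgM_def !fgmulUU mulm1 mul1m mulrC.
Qed.

Lemma mulrZ (M : monomType) (x y : {malg K[M]}) c : x * (c *: y) = c *: (x * y).
Proof. by rewrite -!mul_malgC mulrA malgC_comm mulrA. Qed.

Lemma glext_tens (S : {linear H -> H}) (a b : H) :
  glext (fun p : word2 => << p.1 >> * S << p.2 >>) (tens a b) = a * S b.
Proof.
rewrite /tens glext_sum.
under eq_bigr => u _ do rewrite glext_sum.
rewrite [in RHS](monalgE a) [in RHS](monalgE b) linear_sum mulr_suml.
apply: eq_bigr => u _; rewrite mulr_sumr; apply: eq_bigr => v _.
rewrite glextU /= (monalgUZ (a@_u)) (monalgUZ (b@_v)) linearZ /=.
by rewrite -scalerAl mulrZ scalerA.
Qed.


Lemma conv_glext (S : {linear H -> H}) x :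
  conv id S x = glext (fun p : word2 => << p.1 >> * S << p.2 >>) (Delta x).
Proof. by []. Qed.

Lemma one_malg : (1 : H) = << mone >>.
Proof. by []. Qed.

Lemma Delta1 : Delta (1 : H) = 1.
Proof.
rewrite /Delta /lext -/(glext _ _) one_malg glextU scale1r fm1 big_nil //.
Qed.

Lemma DeltaXS k : Delta (X K k.+1) = DeltaX K k.+1.
Proof.
by rewrite /Delta /lext -/(glext _ _) /= glextU scale1r fmU big_seq1.
Qed.

Lemma convS1 (S : {linear H -> H}) : conv id S 1 = S 1.
Proof.
rewrite conv_glext Delta1.
have -> : (1 : H2) = << 1 *g w2one >> by [].
by rewrite glextU scale1r /= -one_malg mul1r.
Qed.

Lemma convSX (S : {linear H -> H}) k :
  conv id S (X K k.+1) = \sum_(j < k.+2) bellX K k.+2 j.+1 * S (X K j).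
Proof.
rewrite conv_glext DeltaXS /DeltaX glext_sum big_mkord.
by apply: eq_bigr => j _; rewrite glext_tens.
Qed.

Lemma epsX k : epsilon (X K k.+1) = 0.
Proof. by rewrite /epsilon /= mcoeffU1 fm1_eq1. Qed.

Lemma eps1 : epsilon (1 : H) = 1.
Proof. by rewrite /epsilon mcoeff1 eqxx. Qed.


Definition wt (w : word) : nat := sumn (map succn (fmonom_val w)).
Definition homg n (g : H) := forall w, w \in msupp g -> wt w = n.

Lemma homg_sum n I r (P : pred I) (F : I -> H) :
  (forall i, P i -> homg n (F i)) -> homg n (\sum_(i <- r | P i) F i).
Proof.
move=> HF; elim/big_rec: _ => [|i x Pi Hx] w; first by rewrite msupp0 in_fset0.
move=> /(fsubsetP (msuppD_le _ _)); rewrite in_fsetU => /orP[]; [exact: HF | exact: Hx].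
Qed.

Lemma homg_sum_seq n (I : eqType) (r : seq I) (F : I -> H) :
  (forall i, i \in r -> homg n (F i)) -> homg n (\sum_(i <- r) F i).
Proof. by move=> HF; rewrite big_seq; apply: homg_sum. Qed.

Lemma homgD n (a b : H) : homg n a -> homg n b -> homg n (a + b).
Proof.
move=> Ha Hb w /(fsubsetP (msuppD_le _ _)); rewrite in_fsetU => /orP[]; [exact: Ha | exact: Hb].
Qed.

Lemma homgZ n c (g : H) : homg n g -> homg n (c *: g).
Proof. by move=> Hg w /(fsubsetP (msuppZ_le _ _)); exact: Hg. Qed.

Lemma homgU n c (w : word) : wt w = n -> homg n << c *g w >>.
Proof. by move=> Hw w' /(fsubsetP msuppU_le); rewrite in_fset1 => /eqP ->. Qed.

Lemma wt_mul (u v : word) : wt (mmul u v) = (wt u + wt v)%N.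
Proof. by rewrite /wt fmM map_cat sumn_cat. Qed.

Lemma wt_setnth (s : seq nat) j : (j < size s)%N ->
  sumn (map succn (set_nth 0%N s j (nth 0%N s j).+1)) = (sumn (map succn s)).+1.
Proof.
elim: s j => [|x s IH] [|j] //= Hj.
by rewrite IH // addnS.
Qed.

Lemma hom_dword u : homg (wt u).+1 (dword K u).
Proof.
rewrite /dword; apply: homg_sum => j _; apply: homgU.
by rewrite /wt /= wt_setnth.
Qed.

Lemma hom_bell n : homg n (bell K n).
Proof.
elim: n => [|n IH] /=.
  by rewrite one_malg; apply: homgU; rewrite /wt fm1.
apply: homgD.
  rewrite malgM_def fgmulUg; apply: homg_sum_seq => k Hk; apply: homgU.
  by rewrite wt_mul (IH _ Hk) /wt fmU.
rewrite /deriv /lext; apply: homg_sum_seq => u Hu; apply: homgZ.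
rewrite -(IH u Hu); exact: hom_dword.
Qed.

Definition Zw n : word := FMonom (nseq n 0%N).

Lemma coefE (g : H) k : g@_k = \sum_(k2 <- msupp g) g@_k2 *+ (k2 == k).
Proof.
rewrite {1}(monalgE g) raddf_sum; apply: eq_bigr => k2 _. exact: mcoeffU.
Qed.

Lemma bell_Z n : (bell K n)@_(Zw n) = 1.
Proof.
elim: n => [|n IH] /=.
  rewrite mcoeff1 (_ : Zw 0 = mone) ?eqxx //; apply/val_inj; by rewrite /= fm1.
rewrite mcoeffD malgM_def fgmulUg raddf_sum /=.
under eq_bigr => k _ do rewrite mcoeffU mul1r.
have E : forall k : word, (mmul (fmu 0%N) k == Zw n.+1) = (k == Zw n).
  by move=> k; rewrite !fmP fmM fmU /=.
under eq_bigr => k _ do rewrite E.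
rewrite -coefE IH.
rewrite /deriv /lext raddf_sum big1 ?addr0 // => u _ /=.
rewrite mcoeffZ /dword raddf_sum /= big1 ?mulr0 // => j _.
rewrite mcoeffU1.
have -> : (FMonom (set_nth 0%N (fmonom_val u) j (nth 0%N (fmonom_val u) j).+1) == Zw n.+1) = false.
  apply/negbTE/eqP => E2; have := congr1 (fun w : word => nth 0%N (fmonom_val w) j) E2.
  rewrite /= nth_set_nth /= eqxx; case: (nat_of_ord j) => [|j'] //=.
  by rewrite nth_nseq; case: ifP.
by rewrite mulr0n.
Qed.


Lemma sumn_succ (s : seq nat) : sumn (map succn s) = (sumn s + size s)%N.
Proof. by elim: s => //= x s ->; lia. Qed.

Lemma sumn0_nseq (s : seq nat) : sumn s = 0%N -> s = nseq (size s) 0%N.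
Proof.
elim: s => //= x s IH H0.
have -> : x = 0%N by lia.
by rewrite -IH //; lia.
Qed.

Lemma pbell_nn n : pbell K n n = << Zw n >>.
Proof.
have key : forall w, w \in msupp (bell K n) ->
    (size (fmonom_val w) == n) = (w == Zw n).
  move=> w Hw; have Hwt := hom_bell Hw.
  apply/eqP/eqP => [Hs|->]; last by rewrite /Zw /= size_nseq.
  move: Hwt Hs; rewrite /wt sumn_succ; case: w {Hw} => s /= Hwt Hs.
  rewrite /Zw; congr FMonom; rewrite -Hs; apply: sumn0_nseq; lia.
have Zin : Zw n \in msupp (bell K n).
  by rewrite -mcoeff_neq0 bell_Z oner_neq0.
rewrite /pbell big_seq_cond.
rewrite (eq_bigl (fun w => (w \in msupp (bell K n)) && (w == Zw n))); last first.
  move=> w /=; case Hw: (w \in msupp (bell K n)) => //=; exact: key.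
rewrite -big_seq_cond -big_filter filter_pred1_uniq ?fset_uniq //.
by rewrite big_seq1 bell_Z.
Qed.

Lemma bellX_nn n : bellX K n n = 1.
Proof.
rewrite /bellX pbell_nn /substX /lext -/(glext _ _) glextU scale1r /Zw /=.
rewrite big1_seq // => i /andP[_]; rewrite mem_nseq => /andP[_ /eqP ->].
by [].
Qed.

End Alg.

Lemma sortE (m : nat) (J : {set 'I_m}) :
  sort leq [seq (val j).+1 | j in J] = map succn (mv J).
Proof.
have -> : [seq (val j).+1 | j in J] = map succn (mv J) by rewrite /mv -map_comp.
rewrite sorted_sort //; first exact: leq_trans.
rewrite mvE sorted_map; apply: (sorted_filter leq_trans); exact: iota_sorted.
Qed.

Lemma qdet_W (R : ringType) m (A : 'M[R]_m.+1) :
  qdet_hess_1n A =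
  Wsum m (fun l => chainprod (fun i j => A (inord i.-1) (inord j.-1)) 1 (map succn l) m.+1).
Proof.
rewrite /qdet_hess_1n; under eq_bigr => J _ do rewrite sortE.
exact: setsum_W.
Qed.

Theorem mainTheorem3 (K : fieldType) (S : {linear FreeAlg K -> FreeAlg K}) :
  is_antipode S ->
  forall m : nat, S (X K m.+1) = - qdet_1n (Amat K m).
Proof.
move=> [_ HS] m.
have S1 : S 1 = 1 by have := HS 1; rewrite convS1 eps1 scale1r.
have Trec : forall k, (0 < k)%N ->
    S (X K k) = \sum_(q < k) (- bellX K k.+1 q.+1) * S (X K q).
  case => // k _; have := HS (X K k.+1).
  rewrite convSX epsX scale0r big_ord_recr /= bellX_nn mul1r.
  move/eqP; rewrite addrC addr_eq0 => /eqP ->; rewrite -sumrN.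
  by apply: eq_bigr => q _; rewrite mulNr.
rewrite /qdet_1n opprK qdet_W.
pose a := fun i j : nat => (- Amat K m) (inord i.-1) (inord j.-1).
pose c := fun k q : nat => - bellX K k.+1 q.+1.
pose T := fun k : nat => S (X K k).
have Ha : forall i j, (0 < i <= m.+1)%N -> (0 < j <= m.+1)%N ->
    a i j = c (m.+2 - i)%N (m.+1 - j)%N.
  move=> i j /andP[i0 im] /andP[j0 jm]; rewrite /a /c !mxE.
  rewrite (@inordK m i.-1); last by lia.
  rewrite (@inordK m j.-1); last by lia.
  have -> : (m.+1 - i.-1)%N = (m.+2 - i)%N by lia.
  have -> : (m.+1 - j.-1)%N = (m.+1 - j).+1%N by lia.
  by [].
have Tr : forall k, (0 < k <= m.+1)%N -> T k = \sum_(q < k) c k q * T q.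
  by move=> k /andP[k0 _]; exact: Trec.
have := @invariant _ m a c T Ha S1 Tr.
rewrite /T => ->.
by [].
Qed.
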